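(* Let $M$ be a simple $L$-module and $m\ge 1$. Suppose $d^m\in\operatorname{ann}M$, $d^{m-1}\notin\operatorname{ann}M$, and $f(h)d^{m-1}M=0$ for some nonconstant polynomial $f\in\mathbb C[x]$. Then $M$ is finite-dimensional. The same holds with $d$ replaced by $u$. In particular, if $d^m\in\operatorname{ann}M$, $d^{m-1}\notin\operatorname{ann}M$ and $d^mu-s^mud^m\neq 0$ in $L$, then $M$ is finite-dimensional; likewise if $u^m\in\operatorname{ann}M$, $u^{m-1}\notin\operatorname{ann}M$ and $du^m-s^mu^md\neq 0$ in $L$.
   Context: Let $r,s,\gamma\in\mathbb C$ with $rs\neq 0$ and $\phi\in\mathbb C[x]$. The generalized down-up algebra $L=L(\phi,r,s,\gamma)$ is the associative $\mathbb C$-algebra generated by $u,d,h$ subject to $hu-ruh=\gamma u$, $dh-rhd=\gamma d$, $du-sud=\phi(h)$; it is a domain with basis $\{u^ih^jd^k\}$. Modules are left modules; $\operatorname{ann}M$ is the annihilator of $M$ in $L$ (with $d^0=u^0=1$). *)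

(* Defs.v *)
From HB Require Import structures.
From mathcomp Require Import all_boot all_order all_algebra.
Set Implicit Arguments. Unset Strict Implicit. Unset Printing Implicit Defensive.
Import Order.TTheory GRing.Theory Num.Theory.
Local Open Scope ring_scope.

Section LMod.
Variables (F : fieldType) (V : lmodType F).

Definition lin_op (T : V -> V) : Prop :=
  forall (a : F) (x y : V), T (a *: x + y) = a *: T x + T y.

Definition peval (p : {poly F}) (T : V -> V) (v : V) : V :=
  \sum_(i < size p) p`_i *: iter i T v.

(* (U, D, H) defines a left L(phi, r, s, g)-module structure on V, where
   u, d, h act by U, D, H respectively. *)
Definition is_Lmod (phi : {poly F}) (r s g : F) (U D H : V -> V) : Prop :=
  [/\ lin_op U, lin_op D & lin_op H] /\
  [/\ forall v, H (U v) - r *: U (H v) = g *: U v,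
       forall v, D (H v) - r *: H (D v) = g *: D v &
       forall v, D (U v) - s *: U (D v) = peval phi H v].

Definition is_submod (U D H : V -> V) (W : V -> Prop) : Prop :=
  [/\ W 0, forall a x y, W x -> W y -> W (a *: x + y),
      forall x, W x -> W (U x), forall x, W x -> W (D x) &
      forall x, W x -> W (H x)].

Definition simple_Lmod (U D H : V -> V) : Prop :=
  (exists v : V, v != 0) /\
  forall W, is_submod U D H W -> (exists w, W w /\ w != 0) -> forall v, W v.

Definition findim : Prop :=
  exists s : seq V, forall v : V,
    exists c : 'I_(size s) -> F, v = \sum_(i < size s) c i *: s`_i.

End LMod.

(* An element X of L is nonzero iff it acts nonzero on some L-module
   (the regular module is faithful). [Lelem_nonzero phi r s g X] says that
   the element given by the operator expression X(U,D,H) is nonzero in L. *)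
Definition Lelem_nonzero (F : fieldType) (phi : {poly F}) (r s g : F)
  (X : forall V : lmodType F, (V -> V) -> (V -> V) -> (V -> V) -> V -> V) : Prop :=
  exists (W : lmodType F) (U D H : W -> W),
    is_Lmod phi r s g U D H /\ exists w : W, X W U D H w != 0.

(* Main.v *)
Require Import Defs.
From HB Require Import structures.
From mathcomp Require Import all_boot all_order all_algebra.
Import GRing.Theory.
Local Open Scope ring_scope.
Set Implicit Arguments. Unset Strict Implicit.

Section Vec.
Variables (F : fieldType) (V : lmodType F).
Implicit Types (T A B H : V -> V) (p q : {poly F}).

Lemma lin0 T : lin_op T -> T 0 = 0.
Proof.
move=> hT; have e := hT 1 0 0; rewrite scaler0 addr0 scale1r in e.
by apply: (@addrI _ (T 0)); rewrite addr0 -e.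
Qed.

Lemma linZ T a x : lin_op T -> T (a *: x) = a *: T x.
Proof. by move=> hT; have := hT a x 0; rewrite !addr0 (lin0 hT) addr0. Qed.

Lemma linD T x y : lin_op T -> T (x + y) = T x + T y.
Proof. by move=> hT; have := hT 1 x y; rewrite !scale1r. Qed.

Lemma linB T x y : lin_op T -> T (x - y) = T x - T y.
Proof.
move=> hT; have := hT (-1) y x; rewrite !scaleN1r => e.
by rewrite addrC e addrC.
Qed.

Lemma iter_lin T n : lin_op T -> lin_op (iter n T).
Proof.
move=> hT; elim: n => [//|n IH] a x y.
by rewrite !iterS IH hT.
Qed.

Lemma lin_id : lin_op (fun x : V => x).
Proof. by []. Qed.

Lemma lin_sum T n (G : 'I_n -> V) : lin_op T ->
  T (\sum_(i < n) G i) = \sum_(i < n) T (G i).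
Proof.
move=> hT; exact: (big_morph T (fun x y => linD x y hT) (lin0 hT)).
Qed.

Lemma pevalE p T v n : (size p <= n)%N ->
  peval p T v = \sum_(i < n) p`_i *: iter i T v.
Proof.
move=> hn; rewrite /peval (big_ord_widen n (fun i => p`_i *: iter i T v) hn).
rewrite big_mkcond /=; apply: eq_bigr => i _; case: ifP => // /negbT.
by rewrite -leqNgt => hi; rewrite nth_default // scale0r.
Qed.

Lemma peval0 T v : peval 0 T v = 0.
Proof. by rewrite /peval size_poly0 big_ord0. Qed.


Lemma peval_lin_poly a p q T v :
  peval (a *: p + q) T v = a *: peval p T v + peval q T v.
Proof.
set n := maxn (size p) (size q).
have h1 : (size (a *: p + q)%R <= n)%N.
  apply: leq_trans (size_add _ _) _.
  by rewrite geq_max (leq_trans (size_scale_leq _ _) (leq_maxl _ _)) leq_maxr.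
rewrite (pevalE T v h1) (pevalE T v (leq_maxl (size p) (size q))).
rewrite (pevalE T v (leq_maxr (size p) (size q))) scaler_sumr -big_split.
by apply: eq_bigr => i _; rewrite coefD coefZ scalerDl scalerA.
Qed.

Lemma pevalD p q T v : peval (p + q) T v = peval p T v + peval q T v.
Proof. by have := peval_lin_poly 1 p q T v; rewrite !scale1r. Qed.

Lemma pevalZ a p T v : peval (a *: p) T v = a *: peval p T v.
Proof. by have := peval_lin_poly a p 0 T v; rewrite !addr0 peval0 addr0. Qed.

Lemma peval_mulX p T v : peval (p * 'X) T v = peval p T (T v).
Proof.
have h : (size (p * 'X)%R <= (size p).+1)%N.
  by apply: leq_trans (size_polyMleq _ _) _; rewrite size_polyX addn2.
rewrite (pevalE T v h) big_ord_recl coefMX /= scale0r add0r.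
by apply: eq_bigr => i _; rewrite coefMX /= add0n -iterS iterSr.
Qed.


Lemma peval_C c T v : peval c%:P T v = c *: v.
Proof. by rewrite (pevalE T v (size_polyC_leq1 c)) big_ord1 coefC. Qed.

Lemma peval_linv p T : lin_op T -> lin_op (peval p T).
Proof.
move=> hT a x y; rewrite /peval scaler_sumr -big_split.
apply: eq_bigr => i _; rewrite (iter_lin i hT) scalerDr !scalerA mulrC //.
Qed.

Lemma peval_eigen p T x mu : lin_op T -> T x = mu *: x ->
  peval p T x = p.[mu] *: x.
Proof.
move=> hT hx.
have ie : forall i, iter i T x = mu ^+ i *: x.
  elim=> [|i IH]; first by rewrite scale1r.
  by rewrite iterS IH linZ // hx scalerA exprSr.
rewrite /peval horner_coef scaler_suml.
by apply: eq_bigr => i _; rewrite ie scalerA.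
Qed.

End Vec.


Section Span.
Variables (F : fieldType) (V : lmodType F).

Definition span (s : seq V) (v : V) :=
  exists c : nat -> F, v = \sum_(i < size s) c i *: s`_i.

Lemma span0 s : span s 0.
Proof. by exists (fun _ => 0); rewrite big1 // => i _; rewrite scale0r. Qed.

Lemma span_comb s a x y : span s x -> span s y -> span s (a *: x + y).
Proof.
move=> [c1 ->] [c2 ->]; exists (fun i => a * c1 i + c2 i).
rewrite scaler_sumr -big_split; apply: eq_bigr => i _.
by rewrite scalerDl scalerA.
Qed.

Lemma span_add s x y : span s x -> span s y -> span s (x + y).
Proof. by move=> hx hy; have := span_comb 1 hx hy; rewrite scale1r. Qed.

Lemma span_scale s a x : span s x -> span s (a *: x).
Proof. by move=> hx; have := span_comb a hx (span0 s); rewrite addr0. Qed.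

Lemma span_sub s x y : span s x -> span s y -> span s (x - y).
Proof.
by move=> hx hy; have := span_comb (-1) hy hx; rewrite scaleN1r addrC.
Qed.

Lemma span_mem s i : (i < size s)%N -> span s s`_i.
Proof.
move=> hi; exists (fun j => (j == i)%:R).
rewrite (bigD1 (Ordinal hi)) //= eqxx scale1r big1 ?addr0 // => j hj.
suff -> : (nat_of_ord j == i) = false by rewrite scale0r.
apply/negbTE; apply: contra hj => /eqP h; apply/eqP; exact: val_inj.
Qed.

Lemma span_lin_to T s s' v : lin_op T ->
  (forall i, (i < size s)%N -> span s' (T s`_i)) -> span s v -> span s' (T v).
Proof.
move=> hT hs [c ->]; rewrite lin_sum //.
apply: (big_ind (span s')) => [|x y|i _]; first exact: span0.
  exact: span_add.
by rewrite linZ //; apply: span_scale; apply: hs.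
Qed.

End Span.

Section Key.
Variables (F : fieldType) (V : lmodType F).
Variables (A B H : V -> V) (phi : {poly F}) (a1 b1 a3 b3 : F).
Hypotheses (hA : lin_op A) (hB : lin_op B) (hH : lin_op H).
Hypothesis hHA : forall z, H (A z) = A (a1 *: H z + b1 *: z).
Hypothesis hBA : forall z, B (A z) = a3 *: A (B z) + b3 *: peval phi H z.
Hypothesis hsimple : forall W : V -> Prop, W 0 ->
  (forall a x y, W x -> W y -> W (a *: x + y)) ->
  (forall x, W x -> W (A x)) -> (forall x, W x -> W (B x)) ->
  (forall x, W x -> W (H x)) -> (exists w, W w /\ w != 0) -> forall v, W v.

Variables (w : V) (lam : F).
Hypotheses (wn0 : w != 0) (Bw : B w = 0) (Hw : H w = lam *: w).

Lemma eigA j : exists mu, H (iter j A w) = mu *: iter j A w.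
Proof.
elim: j => [|j [mu hmu]]; first by exists lam.
exists (a1 * mu + b1).
by rewrite iterS hHA hmu scalerA -scalerDl (linZ _ _ hA).
Qed.

Lemma BA j : exists c, B (iter j.+1 A w) = c *: iter j A w.
Proof.
elim: j => [|j [c hc]].
  exists (b3 * phi.[lam]).
  by rewrite /= hBA Bw (lin0 hA) scaler0 add0r (peval_eigen _ hH Hw) scalerA.
have [mu hmu] := eigA j.+1.
exists (a3 * c + b3 * phi.[mu]).
rewrite [iter j.+2 A w]iterS hBA hc (linZ _ _ hA) (peval_eigen _ hH hmu).
by rewrite !scalerA -scalerDl.
Qed.

Lemma step1 m : (forall v, iter m B v = 0) ->
  exists k, (0 < k)%N /\ B (iter k A w) = 0.
Proof.
move=> hm.
have claim : forall j, (j <= m)%N -> (exists k, (0 < k)%N /\ B (iter k A w) = 0)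
   \/ exists c, c != 0 /\ iter j B (iter m A w) = c *: iter (m - j) A w.
  elim=> [_|j IH hj].
    by right; exists 1; rewrite oner_eq0 subn0 scale1r.
  case: (IH (ltnW hj)) => [hl|[c [cn0 hc]]]; first by left.
  have [c' hc'] := BA (m - j.+1).
  have e : (m - j.+1).+1 = (m - j)%N by rewrite subnSK.
  rewrite e in hc'.
  case: (eqVneq c' 0) => [c0|c'n0].
    left; exists (m - j)%N; split; first by rewrite subn_gt0.
    by rewrite hc' c0 scale0r.
  right; exists (c * c'); split; first by rewrite mulf_neq0.
  by rewrite iterS hc (linZ _ _ hB) hc' scalerA.
case: (claim m (leqnn m)) => [//|[c [cn0 hc]]].
move: hc; rewrite hm subnn /= => /esym /eqP; rewrite scaler_eq0 (negbTE cn0).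
by rewrite (negbTE wn0).
Qed.

Lemma step2b k : (0 < k)%N -> forall n (c : nat -> F),
  w = \sum_(i < n) c i *: iter (i + k) A w ->
  exists K, (0 < K)%N /\ span (mkseq (fun j => iter j A w) K) (iter K A w).
Proof.
move=> hk; elim=> [|n IH] c hw.
  by move: wn0; rewrite [X in X != 0]hw big_ord0 eqxx.
rewrite big_ord_recr /= in hw.
case: (eqVneq (c n) 0) => [cn0 | cn0].
  by apply: (IH c); rewrite [LHS]hw cn0 scale0r addr0.
exists (n + k)%N; split; first by rewrite addn_gt0 hk orbT.
set s := mkseq (fun j => iter j A w) (n + k).
have memS : forall i, (i < n + k)%N -> span s (iter i A w).
  move=> i hi; have := span_mem (s := s) (i := i).
  by rewrite /s size_mkseq nth_mkseq //; apply.
have e : c n *: iter (n + k) A w = w - \sum_(i < n) c i *: iter (i + k) A w.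
  by rewrite [X in _ = X - _]hw addrC addrK.
have -> : iter (n + k) A w = (c n)^-1 *: (w - \sum_(i < n) c i *: iter (i + k) A w).
  by rewrite -e scalerA mulVf // scale1r.
apply: span_scale; apply: span_sub.
  by apply: (memS 0%N); rewrite addn_gt0 hk orbT.
apply: (big_ind (span s)) => [|x y|i _]; first exact: span0.
  exact: span_add.
by apply: span_scale; apply: memS; rewrite ltn_add2r.
Qed.

Lemma step3 K : (0 < K)%N -> span (mkseq (fun j => iter j A w) K) (iter K A w) ->
  findim V.
Proof.
move=> hK hKs; set s := mkseq (fun j => iter j A w) K.
have memS : forall i, (i < K)%N -> span s (iter i A w).
  move=> i hi; have := span_mem (s := s) (i := i).
  by rewrite /s size_mkseq nth_mkseq //; apply.
have all : forall v, span s v.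
  apply: hsimple.
  - exact: span0.
  - by move=> a x y; apply: span_comb.
  - move=> x; apply: span_lin_to hA _ => i; rewrite size_mkseq => hi.
    rewrite nth_mkseq // -iterS.
    case: (ltnP i.+1 K) => h; first exact: memS.
    have -> : i.+1 = K by apply/eqP; rewrite eqn_leq h hi.
    exact: hKs.
  - move=> x; apply: span_lin_to hB _ => i; rewrite size_mkseq => hi.
    rewrite nth_mkseq //; case: i hi => [|i] hi; first by rewrite /= Bw; exact: span0.
    have [c hc] := BA i; rewrite hc; apply: span_scale; apply: memS.
    exact: ltnW.
  - move=> x; apply: span_lin_to hH _ => i; rewrite size_mkseq => hi.
    rewrite nth_mkseq //; have [mu hmu] := eigA i; rewrite hmu.
    by apply: span_scale; apply: memS.
  - by exists w; split => //; apply: (memS 0%N).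
exists s => v; have [c ->] := all v.
by exists (fun i => c i).
Qed.

Lemma key_w m : (forall v, iter m B v = 0) -> findim V.
Proof.
move=> hm; have [k [hk Bk]] := step1 hm.
case: (eqVneq (iter k A w) 0) => [Ak0 | Akn0].
  by apply: (step3 hk); rewrite Ak0; exact: span0.
pose g := fun j => iter (j + k) A w.
pose W v := exists n, span (mkseq g n) v.
have memg : forall n i, (i < n)%N -> span (mkseq g n) (g i).
  move=> n i hi; have := span_mem (s := mkseq g n) (i := i).
  by rewrite size_mkseq nth_mkseq //; apply.
have mono : forall n n' v, (n <= n')%N -> span (mkseq g n) v -> span (mkseq g n') v.
  move=> n n' v hn hv; apply: (span_lin_to (@lin_id _ _) _ hv) => i.
  rewrite size_mkseq => hi; rewrite nth_mkseq //; apply: memg.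
  exact: leq_trans hi hn.
have allW : forall v, W v.
  apply: hsimple.
  - by exists 0%N; exact: span0.
  - move=> a x y [n1 h1] [n2 h2]; exists (maxn n1 n2); apply: span_comb.
      exact: mono (leq_maxl _ _) h1.
    exact: mono (leq_maxr _ _) h2.
  - move=> x [n hx]; exists n.+1; apply: (span_lin_to hA _ hx) => i.
    rewrite size_mkseq => hi; rewrite nth_mkseq //.
    have -> : A (g i) = g i.+1 by rewrite /g addSn.
    exact: memg.
  - move=> x [n hx]; exists n; apply: (span_lin_to hB _ hx) => i.
    rewrite size_mkseq => hi; rewrite nth_mkseq //.
    case: i hi => [|i] hi; first by rewrite /g add0n Bk; exact: span0.
    have [c hc] := BA (i + k); rewrite /g addSn hc; apply: span_scale.
    exact: memg (ltnW hi).
  - move=> x [n hx]; exists n; apply: (span_lin_to hH _ hx) => i.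
    rewrite size_mkseq => hi; rewrite nth_mkseq //.
    have [mu hmu] := eigA (i + k); rewrite /g hmu; apply: span_scale.
    exact: memg.
  - exists (g 0%N); split; first by exists 1%N; apply: memg.
    by rewrite /g add0n.
have [n [c hc]] := allW w.
have hc' : w = \sum_(i < n) c i *: iter (i + k) A w.
  rewrite [LHS]hc size_mkseq; apply: eq_bigr => i _; rewrite nth_mkseq //.
have [K [hK hKs]] := step2b hk hc'.
exact: step3 hK hKs.
Qed.

End Key.

Section Eigen.
Variables (F : closedFieldType) (V : lmodType F).

Lemma peval_factor (q : {poly F}) a (H : V -> V) x : lin_op H ->
  peval (q * ('X - a%:P)) H x = peval q H (H x - a *: x).
Proof.
move=> hH; rewrite mulrBr [q * a%:P]mulrC mul_polyC.
have -> : q * 'X - a *: q = 1 *: (q * 'X) + (- a) *: q by rewrite scale1r scaleNr.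
rewrite peval_lin_poly pevalZ scale1r peval_mulX.
by rewrite (linB _ _ (peval_linv q hH)) (linZ _ _ (peval_linv q hH)) scaleNr.
Qed.

Lemma eigen (N : V -> Prop) (H : V -> V) : lin_op H ->
  (forall a x, N x -> N (H x - a *: x)) ->
  forall n (p : {poly F}), (size p <= n)%N -> p != 0 ->
  forall x, N x -> x != 0 -> peval p H x = 0 ->
  exists w lam, [/\ N w, w != 0 & H w = lam *: w].
Proof.
move=> hH hN; elim=> [|n IH] p hs pn0 x Nx xn0 hp.
  by move: pn0; rewrite -size_poly_eq0 -leqn0 hs.
case: (eqVneq (size p) 1%N) => [s1|s1].
  have pe : p = (p`_0)%:P by apply: size1_polyC; rewrite s1.
  move: hp; rewrite pe peval_C => /eqP; rewrite scaler_eq0 (negbTE xn0) orbF.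
  by move=> /eqP c0; move: pn0; rewrite pe c0 eqxx.
have [a ra] : exists a, root p a by apply/closed_rootP.
have [q pq] := factor_theorem p a ra.
have qn0 : q != 0 by move: pn0; rewrite pq; apply: contraNneq => ->; rewrite mul0r.
move: hp hs; rewrite pq peval_factor // size_mul // ?polyXsubC_eq0 // size_XsubC addn2 /= => hp hs.
case: (eqVneq (H x - a *: x) 0) => [e|ne].
  by exists x, a; split => //; apply/eqP; rewrite -subr_eq0 e.
exact: (IH q hs qn0 _ (hN a x Nx) ne hp).
Qed.

Lemma key (A B H : V -> V) (phi : {poly F}) (a1 b1 a2 b2 a3 b3 : F) :
  lin_op A -> lin_op B -> lin_op H ->
  (forall z, H (A z) = A (a1 *: H z + b1 *: z)) ->
  (forall z, H (B z) = B (a2 *: H z + b2 *: z)) ->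
  (forall z, B (A z) = a3 *: A (B z) + b3 *: peval phi H z) ->
  (forall W : V -> Prop, W 0 ->
    (forall a x y, W x -> W y -> W (a *: x + y)) ->
    (forall x, W x -> W (A x)) -> (forall x, W x -> W (B x)) ->
    (forall x, W x -> W (H x)) -> (exists w, W w /\ w != 0) -> forall v, W v) ->
  forall m (f : {poly F}), (1 <= m)%N -> (forall v, iter m B v = 0) ->
  (exists v, iter m.-1 B v != 0) -> f != 0 ->
  (forall v, peval f H (iter m.-1 B v) = 0) -> findim V.
Proof.
move=> hA hB hH hHA hHB hBA hs m f hm hmB [v0 hv0] fn0 hf.
pose N x := exists v, x = iter m.-1 B v.
have hiterH : forall n v, exists y, H (iter n B v) = iter n B y.
  elim=> [|n IH] v; first by exists (H v).
  have [y hy] := IH v; exists (a2 *: y + b2 *: v).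
  rewrite iterS hHB hy [iter n.+1 B _]iterS; congr B.
  by rewrite (iter_lin n hB) (linZ _ _ (iter_lin n hB)).
have hN : forall a x, N x -> N (H x - a *: x).
  move=> a x [v ->]; have [y hy] := hiterH m.-1 v; exists (y - a *: v).
  by rewrite hy (linB _ _ (iter_lin _ hB)) (linZ _ _ (iter_lin _ hB)).
have [w [lam [[v ->] wn0 Hw]]] :=
  eigen hH hN (leqnn _) fn0 (ex_intro _ v0 erefl) hv0 (hf v0).
have Bw : B (iter m.-1 B v) = 0 by rewrite -iterS prednK.
exact: (key_w hA hB hH hHA hBA hs wn0 Bw Hw hmB).
Qed.

End Eigen.

Lemma comm_peval (F : fieldType) (al be : F) (q : {poly F}) :
  exists q' : {poly F}, forall (W : lmodType F) (T H : W -> W),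
    lin_op T -> lin_op H -> (forall y, T (H y) = al *: H (T y) + be *: T y) ->
    forall y, T (peval q H y) = peval q' H (T y).
Proof.
move: q; apply: (@poly_ind F) => [|q c [q' hq']].
  by exists 0 => W T H hT hH hTH y; rewrite !peval0 (lin0 hT).
exists (al *: (q' * 'X) + (be *: q' + c%:P)) => W T H hT hH hTH y.
rewrite !pevalD peval_mulX peval_C (linD _ _ hT) hq' // hTH (linZ _ _ hT).
rewrite pevalZ peval_mulX pevalZ peval_C.
by rewrite (linD _ _ (peval_linv q' hH)) !(linZ _ _ (peval_linv q' hH)) addrA.
Qed.

Section Main.
Variables (F : fieldType) (phi : {poly F}) (r s g : F).

Lemma polyD m : exists f : {poly F}, forall (W : lmodType F) (U D H : W -> W),
  is_Lmod phi r s g U D H -> forall w,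
  iter m.+1 D (U w) - s ^+ m.+1 *: U (iter m.+1 D w) = peval f H (iter m D w).
Proof.
elim: m => [|m [f hf]].
  by exists phi => W U D H [_ [_ _ r3]] w; rewrite /= expr1 r3.
have [f2 hf2] := comm_peval r g f.
exists (s ^+ m.+1 *: phi + f2) => W U D H hL w.
have [[hU hD hH] [r1 r2 r3]] := hL.
have hDH : forall y, D (H y) = r *: H (D y) + g *: D y.
  by move=> y; rewrite -r2 addrC subrK.
have e := hf W U D H hL w.
have e' : iter m.+1 D (U w) = peval f H (iter m D w) + s ^+ m.+1 *: U (iter m.+1 D w).
  by rewrite -e subrK.
have eDU : forall z, D (U z) = s *: U (D z) + peval phi H z.
  by move=> z; rewrite -r3 addrC subrK.
rewrite iterS e' (linD _ _ hD) (linZ _ _ hD) hf2 // eDU.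
rewrite peval_lin_poly -iterS scalerDr scalerA -exprSr.
set a := s ^+ m.+2 *: _.
set b := peval f2 _ _.
set c := _ *: peval phi _ _.
by rewrite [a + c]addrC addrA addrK addrC.
Qed.

Lemma polyU m : r != 0 -> exists f : {poly F}, forall (W : lmodType F) (U D H : W -> W),
  is_Lmod phi r s g U D H -> forall w,
  D (iter m.+1 U w) - s ^+ m.+1 *: iter m.+1 U (D w) = peval f H (iter m U w).
Proof.
move=> rn0.
elim: m => [|m [f hf]].
  by exists phi => W U D H [_ [_ _ r3]] w; rewrite /= expr1 r3.
have [f2 hf2] := comm_peval r^-1 (- (r^-1 * g)) f.
exists (s *: f2 + phi) => W U D H hL w.
have [[hU hD hH] [r1 r2 r3]] := hL.
have hUH : forall y, U (H y) = r^-1 *: H (U y) + (- (r^-1 * g)) *: U y.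
  move=> y; apply: (scalerI rn0).
  rewrite scalerDr !scalerA mulfV // scale1r mulrN mulrA mulfV // mul1r scaleNr.
  by rewrite -r1 opprB addrC subrK.
have e := hf W U D H hL w.
have e' : D (iter m.+1 U w) = peval f H (iter m U w) + s ^+ m.+1 *: iter m.+1 U (D w).
  by rewrite -e subrK.
have eDU : forall z, D (U z) = s *: U (D z) + peval phi H z.
  by move=> z; rewrite -r3 addrC subrK.
rewrite [iter m.+2 U w]iterS eDU e' (linD _ _ hU) (linZ _ _ hU) hf2 //.
rewrite peval_lin_poly -[U (iter m.+1 U (D w))]iterS scalerDr scalerA -exprS.
set a := s ^+ m.+2 *: _.
by rewrite addrAC addrK.
Qed.

End Main.

Lemma part1 (F : closedFieldType) (phi : {poly F}) (r s g : F) (rn0 : r != 0)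
  (V : lmodType F) (U D H : V -> V) (m : nat) (f : {poly F}) :
  is_Lmod phi r s g U D H -> simple_Lmod U D H -> (1 <= m)%N ->
  (forall v, iter m D v = 0) -> (exists v, iter m.-1 D v != 0) ->
  f != 0 -> (forall v, peval f H (iter m.-1 D v) = 0) -> findim V.
Proof.
move=> [[hU hD hH] [r1 r2 r3]] [_ hs].
apply: (@key F V U D H phi r g r^-1 (- (r^-1 * g)) s 1) => //.
- move=> z; rewrite (linD _ _ hU) !(linZ _ _ hU).
  by rewrite -r1 addrC subrK.
- move=> z; apply: (scalerI rn0).
  rewrite (linD _ _ hD) !(linZ _ _ hD) scalerDr !scalerA mulfV // scale1r.
  rewrite mulrN mulrA mulfV // mul1r scaleNr.
  by rewrite -r2 opprB addrC subrK.
- by move=> z; rewrite scale1r -r3 addrC subrK.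
- move=> W h0 hl hA hB hH' hne; apply: hs => //; split => //.
Qed.

Lemma part2 (F : closedFieldType) (phi : {poly F}) (r s g : F) (rn0 : r != 0)
  (sn0 : s != 0)
  (V : lmodType F) (U D H : V -> V) (m : nat) (f : {poly F}) :
  is_Lmod phi r s g U D H -> simple_Lmod U D H -> (1 <= m)%N ->
  (forall v, iter m U v = 0) -> (exists v, iter m.-1 U v != 0) ->
  f != 0 -> (forall v, peval f H (iter m.-1 U v) = 0) -> findim V.
Proof.
move=> [[hU hD hH] [r1 r2 r3]] [_ hs].
apply: (@key F V D U H phi r^-1 (- (r^-1 * g)) r g s^-1 (- s^-1)) => //.
- move=> z; apply: (scalerI rn0).
  rewrite (linD _ _ hD) !(linZ _ _ hD) scalerDr !scalerA mulfV // scale1r.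
  rewrite mulrN mulrA mulfV // mul1r scaleNr.
  by rewrite -r2 opprB addrC subrK.
- move=> z; rewrite (linD _ _ hU) !(linZ _ _ hU).
  by rewrite -r1 addrC subrK.
- move=> z; apply: (scalerI sn0).
  rewrite scalerDr !scalerA mulfV // scale1r mulrN mulfV // scaleN1r.
  by rewrite -r3 opprB addrC subrK.
- move=> W h0 hl hA hB hH' hne; apply: hs => //; split => //.
Qed.

Theorem mainTheorem4 (F : closedFieldType) (charF0 : [pchar F] =i pred0)
  (phi : {poly F}) (r s g : F) (hrs : r * s != 0) :
  (* (1) d-version *)
  (forall (V : lmodType F) (U D H : V -> V) (m : nat) (f : {poly F}),
     is_Lmod phi r s g U D H -> simple_Lmod U D H -> (1 <= m)%N ->
     (forall v, iter m D v = 0) -> (exists v, iter m.-1 D v != 0) ->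
     (1 < size f)%N -> (forall v, peval f H (iter m.-1 D v) = 0) ->
     findim V) /\
  (* (2) u-version *)
  (forall (V : lmodType F) (U D H : V -> V) (m : nat) (f : {poly F}),
     is_Lmod phi r s g U D H -> simple_Lmod U D H -> (1 <= m)%N ->
     (forall v, iter m U v = 0) -> (exists v, iter m.-1 U v != 0) ->
     (1 < size f)%N -> (forall v, peval f H (iter m.-1 U v) = 0) ->
     findim V) /\
  (* (3) d^m u - s^m u d^m <> 0 in L *)
  (forall (V : lmodType F) (U D H : V -> V) (m : nat),
     is_Lmod phi r s g U D H -> simple_Lmod U D H -> (1 <= m)%N ->
     (forall v, iter m D v = 0) -> (exists v, iter m.-1 D v != 0) ->
     Lelem_nonzero phi r s g
       (fun W U' D' H' w => iter m D' (U' w) - s ^+ m *: U' (iter m D' w)) ->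
     findim V) /\
  (* (4) d u^m - s^m u^m d <> 0 in L *)
  (forall (V : lmodType F) (U D H : V -> V) (m : nat),
     is_Lmod phi r s g U D H -> simple_Lmod U D H -> (1 <= m)%N ->
     (forall v, iter m U v = 0) -> (exists v, iter m.-1 U v != 0) ->
     Lelem_nonzero phi r s g
       (fun W U' D' H' w => D' (iter m U' w) - s ^+ m *: iter m U' (D' w)) ->
     findim V).
Proof.
have [rn0 sn0] : r != 0 /\ s != 0.
  by move: hrs; rewrite mulf_eq0 negb_or => /andP[].
have fnz : forall f : {poly F}, (1 < size f)%N -> f != 0.
  by move=> f hf; rewrite -size_poly_eq0 -lt0n (ltn_trans _ hf).
split; [|split; [|split]].
- move=> V U D H m f hL hS hm hmD hnz hf hfz.
  exact: (part1 rn0 hL hS hm hmD hnz (fnz f hf) hfz).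
- move=> V U D H m f hL hS hm hmD hnz hf hfz.
  exact: (part2 rn0 sn0 hL hS hm hmD hnz (fnz f hf) hfz).
- move=> V U D H [//|m'] hL hS _ hmD hnz hX.
  have [f hf] := polyD phi r s g m'.
  have fn0 : f != 0.
    apply/eqP => f0; move: hX => [W [U' [D' [H' [hL' [w' hw']]]]]].
    by move: hw'; cbv beta; rewrite (hf _ _ _ _ hL') f0 peval0 eqxx.
  apply: (part1 rn0 hL hS _ hmD hnz fn0) => // v.
  have [[hU _ _] _] := hL.
  by rewrite -(hf _ _ _ _ hL) !hmD (lin0 hU) scaler0 subr0.
- move=> V U D H [//|m'] hL hS _ hmU hnz hX.
  have [f hf] := polyU phi s g m' rn0.
  have fn0 : f != 0.
    apply/eqP => f0; move: hX => [W [U' [D' [H' [hL' [w' hw']]]]]].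
    by move: hw'; cbv beta; rewrite (hf _ _ _ _ hL') f0 peval0 eqxx.
  apply: (part2 rn0 sn0 hL hS _ hmU hnz fn0) => // v.
  have [[_ hD _] _] := hL.
  by rewrite -(hf _ _ _ _ hL) !hmU (lin0 hD) scaler0 subr0.
Qed.
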